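(* Let $A$ be a ribbon Littlewood–Richardson tableau of shape $\alpha=(\alpha_1,\dots,\alpha_m)$, and let $i\in\{1,\dots,m-1\}$ with $\alpha_i>\alpha_{i+1}$. Let $A_{(i\ i+1)}$ be the ribbon tableau of shape $\alpha_{(i\ i+1)}$ obtained from $A$ by applying the $R$-matrix algorithm to rows $i$ and $i+1$ (all other rows unchanged). Then $A_{(i\ i+1)}$ is a Yamanouchi tableau.
   Context: Ribbons: a composition $\alpha=(\alpha_1,\dots,\alpha_m)$ (each $\alpha_i\ge 2$) determines the ribbon skew shape with $m$ rows whose $i$-th row from the top has $\alpha_i$ boxes, where the leftmost box of row $i$ lies directly above the rightmost box of row $i+1$ and no other columns are shared. For $\pi\in S_m$, $\alpha_\pi=(\alpha_{\pi^{-1}(1)},\dots,\alpha_{\pi^{-1}(m)})$; so $\alpha_{(i\ i+1)}$ is $\alpha$ with the $i$-th and $(i+1)$-st entries swapped. A ribbon tableau is a filling of the boxes with positive integers. It is semistandard if entries weakly increase left to right along rows and strictly increase down columns (for a ribbon: each row is weakly increasing, and the rightmost entry of row $i+1$ is strictly greater than the leftmost entry of row $i$). The reverse reading word (RRW) reads each row right to left, rows taken top to bottom. A word is Yamanouchi if every prefix contains at least as many $k$'s as $(k+1)$'s for every $k\ge1$; a tableau is Yamanouchi if its RRW is. A Littlewood–Richardson (LR) tableau is one that is both semistandard and Yamanouchi; its content is $\mu=(\mu_1,\mu_2,\dots)$ with $\mu_k$ the number of entries equal to $k$. $R$-matrix algorithm on rows $i,i+1$ with $\alpha_i>\alpha_{i+1}$: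 form a left multiset $L$ = entries of row $i$ and a right multiset $R$ = entries of row $i+1$. Process each element $b$ of $R$ (in any order; the result is independent of the order): match $b$ to a not-yet-matched element of $L$ that is strictly less than $b$ and as large as possible among such; if no unmatched element of $L$ is less than $b$, match $b$ to a largest unmatched element of $L$. After all of $R$ is processed, exactly $\alpha_{i+1}$ elements of $L$ are matched and $\alpha_i-\alpha_{i+1}$ are unmatched. The new row $i$ consists of the matched elements of $L$ in weakly increasing order (length $\alpha_{i+1}$), and the new row $i+1$ consists of all elements of $R$ together with the unmatched elements of $L$ in weakly increasing order (length $\alpha_i$). Example: rows $1,3,3,4,7$ over $1,3,5$ become $1,4,7$ over $1,3,3,3,5$. This preserves the total content of the two rows and weak increase within each row. *)

(* Defs.v *)
From mathcomp Require Import all_boot.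
Set Implicit Arguments. Unset Strict Implicit. Unset Printing Implicit Defensive.

(* A ribbon tableau is a list of rows, top row first; row i (0-indexed)
   is the list of its entries read left to right.  Its shape (composition)
   is [seq size r | r <- T]. *)
Definition tableau := seq (seq nat).

Definition shape (T : tableau) : seq nat := [seq size r | r <- T].

Definition ribbon_shape (T : tableau) : bool := all (fun r => 2 <= size r) T.

Definition positive_entries (T : tableau) : bool := all (all (fun x => 0 < x)) T.

Definition ribbon_semistandard (T : tableau) : Prop :=
  (forall r, r \in T -> sorted leq r) /\
  (forall i, i.+1 < size T ->
     head 0 (nth [::] T i) < last 0 (nth [::] T i.+1)).

Definition rrw (T : tableau) : seq nat := flatten [seq rev r | r <- T].

Definition yamanouchi (w : seq nat) : Prop :=
  forall n k, 0 < k -> count_mem k.+1 (take n w) <= count_mem k (take n w).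

Definition yamanouchi_tableau (T : tableau) : Prop := yamanouchi (rrw T).

Definition LR_ribbon_tableau (T : tableau) : Prop :=
  [/\ ribbon_shape T, positive_entries T, ribbon_semistandard T
    & yamanouchi_tableau T].

Definition rpick (L : seq nat) (b : nat) : nat :=
  let c := [seq x <- L | x < b] in
  if c is [::] then foldr maxn 0 L else foldr maxn 0 c.

Fixpoint rmatch (L R : seq nat) : seq nat * seq nat :=
  match R with
  | [::] => ([::], L)
  | b :: R' => let m := rpick L b in
               let p := rmatch (rem m L) R' in (m :: p.1, p.2)
  end.

Definition rmatrix_rows (top bot : seq nat) : seq nat * seq nat :=
  let p := rmatch top bot in
  (sort leq p.1, sort leq (bot ++ p.2)).

Definition rmatrix_swap (T : tableau) (i : nat) : tableau :=
  let p := rmatrix_rows (nth [::] T i) (nth [::] T i.+1) in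
  take i T ++ [:: p.1; p.2] ++ drop i.+2 T.

(* Main.v *)
Require Import Defs.
From mathcomp Require Import all_boot.
From mathcomp Require Import zify.

Lemma foldr_maxn_ub (s : seq nat) x : x \in s -> x <= foldr maxn 0 s.
Proof.
elim: s => [|y s IH] //=; rewrite in_cons => /orP [/eqP->|/IH h].
  by rewrite leq_maxl.
by rewrite (leq_trans h) // leq_maxr.
Qed.

Lemma foldr_maxn_le (s : seq nat) k : all (fun x => x <= k) s -> foldr maxn 0 s <= k.
Proof. by elim: s => [|y s IH] //= /andP [h1 /IH h2]; rewrite geq_max h1 h2. Qed.

Lemma foldr_maxn_mem (s : seq nat) : s != [::] -> foldr maxn 0 s \in s.
Proof.
elim: s => [|y s IH] //= _.
case: s IH => [|z s] IH; first by rewrite /= maxn0 mem_head.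
change (maxn y (foldr maxn 0 (z :: s)) \in y :: z :: s).
have /(_ isT) := IH; move: (foldr maxn 0 (z :: s)) => m hm.
rewrite in_cons; case: (leqP y m) => h.
  by rewrite hm orbT.
by rewrite eqxx.
Qed.

Lemma rpick_mem L b : L != [::] -> rpick L b \in L.
Proof.
rewrite /rpick => hL.
case E: [seq x <- L | x < b] => [|y c]; first exact: foldr_maxn_mem.
have : foldr maxn 0 (y :: c) \in [seq x <- L | x < b] by rewrite E foldr_maxn_mem.
by rewrite mem_filter => /andP [].
Qed.

Lemma rpick_k L k : k \in L -> rpick L k.+1 = k.
Proof.
rewrite /rpick => hk.
have hc : k \in [seq x <- L | x < k.+1] by rewrite mem_filter ltnSn hk.
case E: [seq x <- L | x < k.+1] => [|y c]; first by rewrite E in hc.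
rewrite -E; apply/eqP; rewrite eqn_leq foldr_maxn_ub // andbT.
apply: foldr_maxn_le; apply/allP => x; rewrite mem_filter => /andP [].
by rewrite ltnS.
Qed.

Lemma rmatch_sub L R x : x \in (rmatch L R).2 -> x \in L.
Proof.
elim: R L => [|b R IH] L //= /IH; exact: mem_rem.
Qed.

Lemma rmatch_perm L R : size R <= size L ->
  perm_eq ((rmatch L R).1 ++ (rmatch L R).2) L.
Proof.
elim: R L => [|b R IH] L //= hs.
have hL : L != [::] by case: L hs.
have hm : rpick L b \in L by apply: rpick_mem.
have hs' : size R <= size (rem (rpick L b) L).
  by rewrite size_rem //; case: (size L) hs.
rewrite -cat_cons perm_sym; apply: perm_trans (perm_to_rem hm) _.
by rewrite perm_cons perm_sym IH.
Qed.

Lemma rmatch_key L R k :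
  count_mem k.+1 R <= count_mem k (rmatch L R).1 \/ k \notin (rmatch L R).2.
Proof.
elim: R L => [|b R IH] L /=; first by left.
case: (IH (rem (rpick L b) L)) => [h|]; last by right.
case: (eqVneq b k.+1) h => [->|hb] h.
  case hk: (k \in L).
    left; rewrite (@rpick_k L k hk) /= eqxx /= in h *; lia.
  right; apply/negP => /rmatch_sub /mem_rem; by rewrite hk.
have hb' := negbTE hb; rewrite eq_sym in hb'.
left; by rewrite /= ?hb' ?(negbTE hb) /= add0n (leq_trans h) ?leq_addl.
Qed.
Definition yat (w : seq nat) k := count_mem k.+1 w <= count_mem k w.

Lemma block_yat (P D : seq nat) k j :
  count_mem k.+1 P + count_mem k.+1 D <= count_mem k P -> yat (P ++ take j D) k.
Proof.
move=> h; rewrite /yat !count_cat.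
have := cat_take_drop j D => e.
have : count_mem k.+1 D = count_mem k.+1 (take j D) + count_mem k.+1 (drop j D).
  by rewrite -count_cat e.
lia.
Qed.

Lemma sorted_split (D : seq nat) k : sorted (fun x y => y <= x) D ->
  exists D1 D2, [/\ D = D1 ++ D2, count_mem k D1 = 0 & count_mem k.+1 D2 = 0].
Proof.
elim: D => [|x D IH] /=; first by move=> _; exists [::], [::].
move=> hp.
case: (leqP x k) => hx.
  exists [::], (x :: D); split => //.
  have ha := order_path_min (leT := fun x y => y <= x) (fun y x z h1 h2 => leq_trans h2 h1) hp.
  apply/count_memPn; rewrite in_cons negb_or; apply/andP; split.
    by rewrite neq_ltn ltnS hx orbT.
  apply/negP => /(allP ha); lia.
have [D1 [D2 [-> h1 h2]]] := IH (path_sorted hp).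
exists (x :: D1), D2; split => //=.
by rewrite h1 addn0; apply/eqP; rewrite eqb0 eq_sym neq_ltn hx.
Qed.

Lemma take_addn_cat (s t : seq nat) m : take (size s + m) (s ++ t) = s ++ take m t.
Proof. by rewrite take_cat ltnNge leq_addr /= addKn. Qed.

Lemma derive_h1 (P D T : seq nat) k : yamanouchi (P ++ D ++ T) -> 0 < k ->
  sorted (fun x y => y <= x) D ->
  count_mem k.+1 P + count_mem k.+1 D <= count_mem k P.
Proof.
move=> hy hk /(@sorted_split D k) [D1 [D2 [e h1 h2]]].
have := hy (size P + size D1) k hk.
rewrite e -catA take_addn_cat take_size_cat // !count_cat h1 h2; lia.
Qed.

Lemma transfer (P Q Q0 S : seq nat) : yamanouchi (P ++ Q0 ++ S) ->
  perm_eq Q Q0 -> (forall j k, 0 < k -> yat (P ++ take j Q) k) ->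
  yamanouchi (P ++ Q ++ S).
Proof.
move=> hy hp hQ n k hk.
case: (leqP (size P) n) => hn; last first.
  have := hy n k hk; by rewrite !take_cat hn.
rewrite -(subnKC hn) take_addn_cat.
case: (leqP (size Q) (n - size P)) => hm; last first.
  by rewrite take_cat hm; apply: hQ.
rewrite -(subnKC hm) take_addn_cat.
have hsz : size Q = size Q0 by apply: perm_size.
have := hy (size P + (size Q0 + (n - size P - size Q))) k hk.
rewrite take_addn_cat take_addn_cat.
by rewrite !count_cat !(permP hp).
Qed.

Lemma rrw_cat (s t : tableau) : rrw (s ++ t) = rrw s ++ rrw t.
Proof. by rewrite /rrw map_cat flatten_cat. Qed.

Lemma rrw_cons (x : seq nat) (t : tableau) : rrw (x :: t) = rev x ++ rrw t.
Proof. by []. Qed.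

Lemma arith_fin (p1 p0 m1 m0 u1 u0 l1 l0 r1 : nat) :
  m0 + u0 = l0 -> m1 + u1 = l1 -> p1 + l1 <= p0 -> p1 + l1 + r1 <= p0 + l0 ->
  (r1 <= m0 \/ u0 = 0) -> p1 + m1 + (r1 + u1) <= p0 + m0.
Proof. move=> h1 h2 h3 h4 [h5|h5]; lia. Qed.

Theorem lemma3p1 (A : tableau) (i : nat) :
  LR_ribbon_tableau A ->
  i.+1 < size A ->
  size (nth [::] A i.+1) < size (nth [::] A i) ->
  yamanouchi_tableau (rmatrix_swap A i).
Proof.
move=> [_ _ [hsort _] hy] hi hsz.
have hi0 : i < size A by apply: ltnW.
set L := nth [::] A i; set R := nth [::] A i.+1.
have eA : A = take i A ++ L :: R :: drop i.+2 A.
  by rewrite -{1}(cat_take_drop i A) (drop_nth [::] hi0) (drop_nth [::] hi).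
have hy0 : yamanouchi (rrw (take i A) ++ (rev L ++ rev R) ++ rrw (drop i.+2 A)).
  by move: hy; rewrite /yamanouchi_tableau {1}eA rrw_cat /= -!catA.
have hsL : sorted leq L by apply: hsort; apply: mem_nth.
have hsR : sorted leq R by apply: hsort; apply: mem_nth.
have hsL' : sorted (fun x y => y <= x) (rev L) by rewrite rev_sorted.
have hsR' : sorted (fun x y => y <= x) (rev R) by rewrite rev_sorted.
set P := rrw (take i A); set S := rrw (drop i.+2 A).
have hperm := @rmatch_perm L R (ltnW hsz).
set M := (rmatch L R).1 in hperm *; set U := (rmatch L R).2 in hperm *.
have cntL (a : pred nat) : count a M + count a U = count a L.
  by rewrite -count_cat (permP hperm).
rewrite /yamanouchi_tableau /rmatrix_swap /rmatrix_rows /= -/M -/U rrw_cat /=.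
rewrite !rrw_cons -/R -/S [rev _ ++ rev _ ++ _]catA.
apply: (@transfer P _ (rev L ++ rev R) S); first exact: hy0.
  apply/permP => a; rewrite !count_cat !count_rev !count_sort count_cat; rewrite -cntL [count a R + _]addnC addnA //.
move=> j k hk.
have hy1 : yamanouchi (P ++ rev L ++ rev R ++ S) by rewrite -catA in hy0.
have hy2 : yamanouchi ((P ++ rev L) ++ rev R ++ S) by rewrite -catA.
have O1 := @derive_h1 P (rev L) (rev R ++ S) k hy1 hk hsL'.
have O2 := @derive_h1 (P ++ rev L) (rev R) S k hy2 hk hsR'.
rewrite !count_cat !count_rev in O2; rewrite !count_rev in O1.
have c1 := cntL (pred1 k); have c2 := cntL (pred1 k.+1).
rewrite take_cat; case: ifP => _.
  apply: block_yat; rewrite count_rev count_sort.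
  by rewrite (leq_trans _ O1) // leq_add2l -c2 leq_addr.
rewrite catA; apply: block_yat; rewrite !count_cat !count_rev !count_sort count_cat.
apply: (@arith_fin _ _ _ _ _ _ _ _ _ c1 c2 O1 O2).
case: (rmatch_key L R k) => hkey; [left|right]; first exact: hkey.
exact/count_memPn.
Qed.
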